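(* Let $q$ be a prime power, $k,t$ positive integers, and let $\mathcal{P}=\{P_1,\ldots,P_E\}$ be a partition of $\mathbb{F}_q^k$. For every list of distinct vectors $u_1,\ldots,u_m\in\mathbb{F}_q^k$, $$N\big(\mathcal{D}_{\mathcal{P}}(t;u_1,\ldots,u_m)\big)\;\le\; r_{\mathcal{P}}(k,t)\;\le\; N\big(\mathcal{D}_{\mathcal{P}}(t;P_1,\ldots,P_E)\big).$$ Moreover, if $E\ge 2$, then $r_{\mathcal{P}}(k,t)\ge 2t$.
   Context: $d(\cdot,\cdot)$ denotes Hamming distance. A $(\mathcal{P},t)$-encoding with redundancy $r$ is a systematic map $\mathcal{C}:\mathbb{F}_q^k\to\mathbb{F}_q^{k+r}$, $\mathcal{C}(u)=(u,p(u))$ with $p(u)\in\mathbb{F}_q^r$, such that $d(\mathcal{C}(u),\mathcal{C}(v))\ge 2t+1$ whenever $u,v$ lie in different blocks of $\mathcal{P}$. The optimal redundancy $r_{\mathcal{P}}(k,t)$ is the minimum $r$ for which a $(\mathcal{P},t)$-encoding with redundancy $r$ exists. For distinct $u_1,\ldots,u_M\in\mathbb{F}_q^k$, the partition distance requirement matrix $\mathcal{D}_{\mathcal{P}}(t;u_1,\ldots,u_M)$ is the $M\times M$ matrix with $(i,j)$ entry $\max(2t+1-d(u_i,u_j),0)$ if $u_i,u_j$ lie in different blocks of $\mathcal{P}$ and $0$ otherwise. For blocks, $d(P_i,P_j)=\min_{u\in P_i,v\in P_j}d(u,v)$ for $i\ne j$; the partition distance matrix $\mathcal{D}_{\mathcal{P}}(t;P_1,\ldots,P_E)$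 is the $E\times E$ matrix with $(i,j)$ entry $\max(2t+1-d(P_i,P_j),0)$ for $i\neq j$ and $0$ on the diagonal. For a matrix $D\in\mathbb{N}^{M\times M}$, $N(D)$ is the smallest integer $r\ge 0$ such that there exist $z_1,\ldots,z_M\in\mathbb{F}_q^r$ (not necessarily distinct) with $d(z_i,z_j)\ge D_{i,j}$ for all $i\ne j$ (such a list is called a $D$-code). *)

(* Defs.v *)
From HB Require Import structures.
From mathcomp Require Import all_boot all_order all_algebra all_field.
From Stdlib Require Import ClassicalEpsilon.
Set Implicit Arguments. Unset Strict Implicit. Unset Printing Implicit Defensive.

(* Least natural number satisfying a (boolean) predicate; 0 if none exists
   (for all predicates used here a witness exists). *)
Definition min_nat (Pr : pred nat) : nat :=
  match excluded_middle_informative (exists n, Pr n) with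
  | left h => ex_minn h
  | right _ => 0
  end.

Definition hamming (F : finType) (n : nat) (x y : 'rV[F]_n) : nat :=
  #|[set i : 'I_n | x ord0 i != y ord0 i]|.

Definition is_Dcode_len (F : finType) (M : nat) (D : 'M[nat]_M) (r : nat) : bool :=
  [exists z : {ffun 'I_M -> 'rV[F]_r},
     [forall i : 'I_M, forall j : 'I_M,
        (i != j) ==> (D i j <= hamming (z i) (z j))]].

Definition N_req (F : finType) (M : nat) (D : 'M[nat]_M) : nat :=
  min_nat (is_Dcode_len F D).

Definition has_encoding (F : finType) (k : nat) (P : {set {set 'rV[F]_k}})
    (t r : nat) : bool :=
  [exists p : {ffun 'rV[F]_k -> 'rV[F]_r},
     [forall u : 'rV[F]_k, forall v : 'rV[F]_k,
        (pblock P u != pblock P v) ==>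
        (2 * t + 1 <= hamming (row_mx u (p u)) (row_mx v (p v)))]].

Definition r_opt (F : finType) (k : nat) (P : {set {set 'rV[F]_k}}) (t : nat) : nat :=
  min_nat (has_encoding P t).

(* Partition distance requirement matrix D_P(t; u_1..u_M);
   nat subtraction truncates, i.e. gives max(. , 0). *)
Definition DP_vecs (F : finType) (k : nat) (P : {set {set 'rV[F]_k}}) (t : nat)
    (M : nat) (u : 'I_M -> 'rV[F]_k) : 'M[nat]_M :=
  \matrix_(i, j) (if pblock P (u i) != pblock P (u j)
                  then (2 * t + 1) - hamming (u i) (u j) else 0).

(* Distance between two sets of vectors: minimum over pairs (the default
   value k is never smaller than any Hamming distance, so for nonempty sets
   this is exactly the minimum). *)
Definition set_dist (F : finType) (k : nat) (A B : {set 'rV[F]_k}) : nat :=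
  \big[minn/k]_(u in A) \big[minn/k]_(v in B) hamming u v.

Definition DP_blocks (F : finType) (k : nat) (P : {set {set 'rV[F]_k}}) (t : nat)
    : 'M[nat]_#|P| :=
  \matrix_(i, j) (if i != j
                  then (2 * t + 1) - set_dist (enum_val i) (enum_val j) else 0).

(* Main.v *)
Require Import Defs.
From HB Require Import structures.
From mathcomp Require Import all_boot all_order all_algebra all_field.
From mathcomp Require Import zify.
From Stdlib Require Import ClassicalEpsilon.

Lemma min_nat_le (Pr : pred nat) n : Pr n -> min_nat Pr <= n.
Proof.
move=> Hn; rewrite /min_nat; case: excluded_middle_informative => [h|h].
  by case: ex_minnP => m _ /(_ n Hn).
by [].
Qed.

Lemma min_nat_P (Pr : pred nat) n : Pr n -> Pr (min_nat Pr).
Proof.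
move=> Hn; rewrite /min_nat; case: excluded_middle_informative => [h|h].
  by case: ex_minnP.
by exfalso; apply: h; exists n.
Qed.

Lemma hammingE (F : finType) n (x y : 'rV[F]_n) :
  hamming x y = \sum_(i < n) (x ord0 i != y ord0 i).
Proof.
rewrite /hamming -sum1_card big_mkcond /=.
by apply: eq_bigr => i _; rewrite inE; case: (_ != _).
Qed.

Lemma hamming_row_mx (F : finType) m n (a c : 'rV[F]_m) (b d : 'rV[F]_n) :
  hamming (row_mx a b) (row_mx c d) = hamming a c + hamming b d.
Proof.
rewrite !hammingE big_split_ord /=.
by congr (_ + _); apply: eq_bigr => i _; rewrite ?row_mxEl ?row_mxEr.
Qed.

Lemma hamming_le (F : finType) n (x y : 'rV[F]_n) : hamming x y <= n.
Proof. rewrite /hamming; have := max_card (mem [set i | x ord0 i != y ord0 i]); by rewrite card_ord. Qed.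

Lemma bigmin_le (T : eqType) (r : seq T) (P : pred T) (G : T -> nat) k u0 :
  u0 \in r -> P u0 -> \big[minn/k]_(u <- r | P u) G u <= G u0.
Proof.
elim: r => [|a r IH] //; rewrite inE big_cons => /orP [/eqP<-|Hr] Hp.
  by rewrite Hp geq_minl.
case: (P a); last exact: IH.
by rewrite geq_min IH ?orbT.
Qed.

Lemma set_dist_le (F : finType) k (A B : {set 'rV[F]_k}) u v :
  u \in A -> v \in B -> set_dist A B <= hamming u v.
Proof.
move=> uA vB; rewrite /set_dist.
apply: (leq_trans (@bigmin_le _ _ (fun u => u \in A)
  (fun u => \big[minn/k]_(v in B) hamming u v) k u (mem_index_enum u) uA)).
exact: (@bigmin_le _ _ (fun v => v \in B) (fun v => hamming u v) k v (mem_index_enum v) vB).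
Qed.
Lemma dcode_exists (F : finFieldType) M (D : 'M[nat]_M) d :
  (forall i j, D i j <= d) -> is_Dcode_len F D (d * M).
Proof.
move=> HD; apply/existsP.
exists [ffun i : 'I_M => (\matrix_(r0 < 1, j < d * M) if ((j %% M)%N == i :> nat) then (1:F) else 0%R)%R : 'rV[F]_(d * M)].
apply/forallP => i; apply/forallP => j; apply/implyP => ij.
apply: leq_trans (HD i j) _.
have lt a : a < d -> a * M + i < d * M.
  move=> ad; have := ltn_ord i; nia.
pose f (a : 'I_d) := Ordinal (lt a (ltn_ord a)).
have finj : injective f.
  move=> a b /(congr1 val) /= /eqP; rewrite eqn_add2r eqn_mul2r.
  case/orP => [/eqP M0|/eqP ab]; last exact: val_inj.
  by have := ltn_ord i; lia.
rewrite /hamming -{1}(card_ord d) -(card_imset _ finj).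
apply: subset_leq_card; apply/subsetP => x /imsetP [a _ ->].
rewrite inE !ffunE !mxE /= modnMDl modn_small //.
have -> : (nat_of_ord i == nat_of_ord j) = false.
  by apply/negbTE; move: ij; apply: contra => /eqP /val_inj ->.
rewrite eqxx.
exact: GRing.oner_neq0.
Qed.


Lemma DP_blocks_le (F : finType) k (P : {set {set 'rV[F]_k}}) t i j :
  DP_blocks P t i j <= 2 * t + 1.
Proof. by rewrite mxE; case: (_ != _) => //; rewrite leq_subr. Qed.

Lemma enc_from_dcode (F : finFieldType) k t (P : {set {set 'rV[F]_k}}) r :
  partition P [set: 'rV[F]_k] -> is_Dcode_len F (DP_blocks P t) r ->
  has_encoding P t r.
Proof.
case/and3P => /eqP cov triv _ /existsP [z /forallP Hz].
have inP u : pblock P u \in P by apply: pblock_mem; rewrite cov inE.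
have ex u : exists i : 'I_#|P|, enum_val i == pblock P u.
  by exists (enum_rank_in (inP u) (pblock P u)); rewrite enum_rankK_in.
pose idx u := xchoose (ex u).
have case_idx u : {i : 'I_#|P| | enum_val i = pblock P u & idx u = i}.
  exists (idx u) => //; apply/eqP; exact: (xchooseP (ex u)).
apply/existsP; exists [ffun u => z (idx u)].
apply/forallP => u; apply/forallP => v; apply/implyP => Huv.
rewrite hamming_row_mx !ffunE.
case: (case_idx u) => iu Eu ->; case: (case_idx v) => iv Ev ->.
have ne : iu != iv by apply: contra Huv => /eqP e; rewrite -Eu -Ev e.
have := implyP (forallP (Hz iu) iv) ne; rewrite mxE ne Eu Ev.
have : set_dist (pblock P u) (pblock P v) <= hamming u v.
  by apply: set_dist_le; rewrite mem_pblock cov inE.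
move: (set_dist _ _) (hamming u v) (hamming (z iu) (z iv)) => a b c; lia.
Qed.
Lemma wstep_lemma (F : finFieldType) k (u v : 'rV[F]_k) s :
  hamming (\matrix_(r0 < 1, j < k) if (j < s)%N then v ord0 j else u ord0 j)%R
          (\matrix_(r0 < 1, j < k) if (j < s.+1)%N then v ord0 j else u ord0 j)%R <= 1.
Proof.
apply/card_le1_eqP => x y; rewrite !inE !mxE.
have H (z : 'I_k) : (if z < s then v ord0 z else u ord0 z) != (if z < s.+1 then v ord0 z else u ord0 z) -> z = s :> nat.
  rewrite [z < s.+1]ltnS [z <= s]leq_eqVlt; case: (nat_of_ord z =P s) => //= _; by case: (_ < _); rewrite eqxx.
by move=> /H ex /H ey; apply: val_inj => /=; rewrite ex ey.
Qed.

Lemma enc_lower (F : finFieldType) k t (P : {set {set 'rV[F]_k}}) r :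
  partition P [set: 'rV[F]_k] -> has_encoding P t r -> 2 <= #|P| -> 2 * t <= r.
Proof.
case/and3P => /eqP cov triv P0 /existsP [p /forallP Hp] P2.
rewrite leqNgt; apply/negP => rlt.
have adj u v : hamming u v <= 1 -> pblock P u = pblock P v.
  move=> h1; apply/eqP; apply/negPn/negP => ne.
  have := implyP (forallP (Hp u) v) ne; rewrite hamming_row_mx.
  have := @hamming_le F r (p u) (p v).
  move: (hamming u v) (hamming (p u) (p v)) h1 => a b; lia.
pose w (u v : 'rV[F]_k) (s : nat) : 'rV[F]_k :=
  (\matrix_(r0 < 1, j < k) if (j < s)%N then v ord0 j else u ord0 j)%R.
have wstep u v s : hamming (w u v s) (w u v s.+1) <= 1 by exact: wstep_lemma.
have wall u v s : pblock P (w u v s) = pblock P u.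
  elim: s => [|s IH].
    congr pblock; apply/rowP => j; rewrite mxE; done.
  by rewrite -IH; apply/esym/adj; rewrite wstep.
have allsame u v : pblock P u = pblock P v.
  have := wall u v k; rewrite /w => <-; congr pblock.
  by apply/rowP => j; rewrite mxE ltn_ord.
move: P2; rewrite leqNgt; apply/negP; rewrite negbK.
apply/card_le1_eqP => B C BP CP.
have [u uB] : exists u, u \in B.
  by apply/set0Pn; apply: contraNneq P0 => <-.
have [v vC] : exists v, v \in C.
  by apply/set0Pn; apply: contraNneq P0 => <-.
by rewrite -(def_pblock triv BP uB) -(def_pblock triv CP vC) (allsame u v).
Qed.

Theorem theorem2 (F : finFieldType) (k t : nat)
    (P : {set {set 'rV[F]_k}}) :
  0 < k -> 0 < t -> partition P [set: 'rV[F]_k] ->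
  (forall (m : nat) (u : 'I_m -> 'rV[F]_k), injective u ->
      N_req F (DP_vecs P t u) <= r_opt P t)
  /\ r_opt P t <= N_req F (DP_blocks P t)
  /\ (2 <= #|P| -> 2 * t <= r_opt P t).
Proof.
move=> k0 t0 Hpart.
have Dc := @dcode_exists F #|P| (DP_blocks P t) (2 * t + 1) (@DP_blocks_le F k P t).
have Nc := min_nat_P _ _ Dc.
have Enc := @enc_from_dcode F k t P _ Hpart Nc.
have Ropt := min_nat_P _ _ Enc.
split; last split.
- move=> m u _; apply: min_nat_le.
  case/existsP: Ropt => p /forallP Hp.
  apply/existsP; exists [ffun i => p (u i)].
  apply/forallP => i; apply/forallP => j; apply/implyP => _.
  rewrite mxE !ffunE; case: ifP => // ne.
  have := implyP (forallP (Hp (u i)) (u j)) ne; rewrite hamming_row_mx.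
  move: (hamming (u i) (u j)) (hamming (p (u i)) (p (u j))) => a b; lia.
- exact: min_nat_le _ _ Enc.
- exact: (@enc_lower F k t P _ Hpart Ropt).
Qed.
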